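(* Let $n\ge2$. The discriminant $\mathrm{Disc}\in\mathbb{R}[\mathrm{Her}(n)]$, $\mathrm{Disc}(A)=\prod_{1\le i<j\le n}(\lambda_i-\lambda_j)^2$ where $\lambda_1,\dots,\lambda_n$ are the eigenvalues of $A$, can be written as a sum of $2\binom{2n-1}{n-1}$ squares of elements of $\mathbb{R}[\mathrm{Her}(n)]$.
   Context: $\mathrm{Her}(n)=\{A\in\mathbb{C}^{n\times n}\mid\bar A=A^T\}$ viewed as a real vector space; $\mathbb{R}[\mathrm{Her}(n)]$ is its ring of real polynomial functions. *)

(* Defs.v *)
From HB Require Import structures.
From mathcomp Require Import all_boot all_order all_algebra.
From mathcomp Require Import complex.
From mathcomp Require Import Rstruct.
From mathcomp Require Import mpoly.
From Stdlib Require Rdefinitions.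
Set Implicit Arguments. Unset Strict Implicit. Unset Printing Implicit Defensive.
Import Order.TTheory GRing.Theory Num.Theory.
Local Open Scope ring_scope.
Local Open Scope complex_scope.

Definition CR := (complex Rdefinitions.R).

Definition is_hermitian (n : nat) (A : 'M[CR]_n) : bool :=
  A^T == map_mx (@conjc Rdefinitions.R) A.

Definition herm_coords (n : nat) (A : 'M[CR]_n) : 'I_(n * n + n * n) -> Rdefinitions.R :=
  fun k => row_mx (mxvec (map_mx (@complex.Re Rdefinitions.R) A))
                  (mxvec (map_mx (@complex.Im Rdefinitions.R) A)) 0 k.

(* Real polynomial functions on Her(n): evaluations of real polynomials in
   these coordinates. *)
Definition herm_polyfun (n : nat) (p : {mpoly Rdefinitions.R[n * n + n * n]})
  (A : 'M[CR]_n) : Rdefinitions.R := p.@[herm_coords A].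

Definition eigenvalue_list (n : nat) (A : 'M[CR]_n) (s : seq CR) : Prop :=
  char_poly A = \prod_(x <- s) ('X - x%:P).

Definition disc_of (s : seq CR) : CR :=
  \prod_(i < size s) \prod_(j < size s | (i < j)%N) (s`_i - s`_j) ^+ 2.

(* Main.v *)
Require Import Defs.
From HB Require Import structures.
From mathcomp Require Import all_boot all_order all_algebra.
From mathcomp Require Import complex.
From mathcomp Require Import Rstruct.
From mathcomp Require Import mpoly.
From Stdlib Require Rdefinitions.
Import GRing.Theory Num.Theory.
Local Open Scope ring_scope.
Local Open Scope complex_scope.
From mathcomp Require Import fingroup perm ring lra sesquilinear spectral.
Set Implicit Arguments. Unset Strict Implicit. Unset Printing Implicit Defensive.
Notation C := CR.

Definition mxpow n (k : nat) (A : 'M[C]_n) : 'M[C]_n := iter k (fun B => A *m B) 1%:M.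

Definition Kmx n (A : 'M[C]_n) (f : 'I_n -> 'I_n) : 'M[C]_n :=
  \matrix_(i, k) mxpow k A i (f k).

Definition Pf n (A : 'M[C]_n) (f : 'I_n -> 'I_n) : C :=
  \sum_(p : 'S_n) \det (Kmx A (fun k => f (p k))).

Section Poly.
Variable n : nat.
Local Notation N := (n * n + n * n)%N.
Definition hcc (A : 'M[C]_n) : 'I_N -> C := fun k => (herm_coords A k)%:C.
Definition ispoly (F : 'M[C]_n -> C) :=
  {q : {mpoly C[N]} | forall A, F A = q.@[hcc A]}.

Lemma ispoly_ext F G : (forall A, G A = F A) -> ispoly F -> ispoly G.
Proof. by move=> e [q Hq]; exists q => A; rewrite e Hq. Qed.

Lemma ispolyC c : ispoly (fun _ => c).
Proof. by exists c%:MP => A; rewrite mevalC. Qed.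

Lemma ispolyD F G : ispoly F -> ispoly G -> ispoly (fun A => F A + G A).
Proof. by move=> [p Hp] [q Hq]; exists (p + q) => A; rewrite mevalD Hp Hq. Qed.

Lemma ispolyM F G : ispoly F -> ispoly G -> ispoly (fun A => F A * G A).
Proof. by move=> [p Hp] [q Hq]; exists (p * q) => A; rewrite mevalM Hp Hq. Qed.

Lemma ispoly_sum (I : finType) (F : I -> 'M[C]_n -> C) :
  (forall i, ispoly (F i)) -> ispoly (fun A => \sum_i F i A).
Proof.
move=> HF; rewrite /ispoly.
suff: forall r : seq I, ispoly (fun A => \sum_(i <- r) F i A).
  by move=> /(_ (index_enum I)).
elim=> [|i r IH].
  by have [q Hq] := ispolyC 0; exists q => A; rewrite big_nil; exact: Hq.
have [q Hq] := ispolyD (HF i) IH; exists q => A; rewrite big_cons Hq.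
done.
Qed.

Lemma ispoly_prod (I : finType) (F : I -> 'M[C]_n -> C) :
  (forall i, ispoly (F i)) -> ispoly (fun A => \prod_i F i A).
Proof.
move=> HF; rewrite /ispoly.
suff: forall r : seq I, ispoly (fun A => \prod_(i <- r) F i A).
  by move=> /(_ (index_enum I)).
elim=> [|i r IH].
  by have [q Hq] := ispolyC 1; exists q => A; rewrite big_nil; exact: Hq.
have [q Hq] := ispolyM (HF i) IH; exists q => A; rewrite big_cons Hq.
done.
Qed.

Lemma ispoly_entry i j : ispoly (fun A => A i j).
Proof.
exists ('X_(lshift _ (mxvec_index i j)) + 'i%:MP * 'X_(rshift _ (mxvec_index i j))).
move=> A; rewrite mevalD mevalM mevalC !mevalXU /hcc /herm_coords.
rewrite row_mxEl row_mxEr !mxvecE !mxE.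
by case: (A i j) => a b; apply/eqP; rewrite eq_complex /=; simpl; apply/andP; split; apply/eqP; ring.
Qed.

Lemma ispoly_pow k i j : ispoly (fun A => mxpow k A i j).
Proof.
elim: k i j => [|k IH] i j.
  by apply: (ispoly_ext _ (ispolyC _)) => A; rewrite /mxpow /= mxE.
apply: (ispoly_ext (F := fun A => \sum_l A i l * mxpow k A l j)) => [A|].
  by rewrite /mxpow /= mxE.
apply: ispoly_sum => l; apply: ispolyM; first exact: ispoly_entry.
exact: IH.
Qed.

Lemma ispoly_Pf f : ispoly (fun A => Pf A f).
Proof.
apply: ispoly_sum => p; rewrite /determinant.
apply: ispoly_sum => s; apply: ispolyM; first exact: ispolyC.
apply: ispoly_prod => i.
apply: (ispoly_ext _ (ispoly_pow _ _ _)) => A; rewrite mxE; reflexivity.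
Qed.
End Poly.

Section Spec.
Variable n : nat.
Variable Q : 'M[C]_n.
Hypothesis HQ : Q *m (map_mx Num.conj Q^T) = 1%:M.
Variable d : 'rV[C]_n.
Local Notation Qs := (map_mx Num.conj Q^T).

Lemma HQ' : Qs *m Q = 1%:M.
Proof. exact: mulmx1C HQ. Qed.

Lemma pow_spec k : mxpow k (Qs *m diag_mx d *m Q) =
  Qs *m diag_mx (\row_r d 0 r ^+ k) *m Q.
Proof.
elim: k => [|k IH].
  rewrite /mxpow /=.
  have -> : diag_mx (\row_r d 0 r ^+ 0) = 1%:M.
    by apply/matrixP => i j; rewrite !mxE expr0.
  by rewrite mulmx1 HQ'.
rewrite /mxpow /= -/(mxpow k _) IH.
rewrite !mulmxA -[Qs *m diag_mx d *m Q *m Qs]mulmxA HQ mulmx1.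
rewrite -[Qs *m diag_mx d *m diag_mx _]mulmxA mulmx_diag.
congr (_ *m diag_mx _ *m _); apply/rowP => j; rewrite !mxE exprS //.
Qed.

Definition Mf (f : 'I_n -> 'I_n) : 'M[C]_n := \matrix_(r, k) (d 0 r ^+ k * Q r (f k)).

Lemma Kmx_spec f : Kmx (Qs *m diag_mx d *m Q) f = Qs *m Mf f.
Proof.
apply/matrixP => i k; rewrite !mxE pow_spec -mulmxA mxE.
by apply: eq_bigr => r _; rewrite mul_diag_mx !mxE.
Qed.

Definition Vd : C := \sum_(s : 'S_n) (-1) ^+ s * \prod_r d 0 r ^+ s r.
Definition per (f : 'I_n -> 'I_n) : C := \sum_(p : 'S_n) \prod_r Q r (f (p r)).

Lemma Pf_spec f : Pf (Qs *m diag_mx d *m Q) f = \det Qs * (Vd * per f).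
Proof.
rewrite /Pf; under eq_bigr => p _ do rewrite Kmx_spec det_mulmx.
rewrite -mulr_sumr; congr (_ * _).
rewrite /Vd /per mulr_suml.
under eq_bigr => p _ do rewrite /determinant.
rewrite exchange_big /=; apply: eq_bigr => s _.
have E : forall p : 'S_n, \prod_i Mf (fun k => f (p k)) i (s i) =
   (\prod_r d 0 r ^+ s r) * \prod_r Q r (f (p (s r))).
  by move=> p; rewrite -big_split /=; apply: eq_bigr => r _; rewrite mxE.
under eq_bigr => p _ do rewrite E.
rewrite -mulrA -!mulr_sumr; congr (_ * (_ * _)).
symmetry; rewrite (reindex_inj (mulgI s)) /=; apply: eq_bigr => p _.
by apply: eq_bigr => r _; rewrite permM.
Qed.
Lemma perE f : per f = \sum_(p : 'S_n) \prod_k Q (p k) (f k).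
Proof.
rewrite /per (reindex_inj (@invg_inj _)) /=; apply: eq_bigr => p _.
rewrite (reindex_inj (@perm_inj _ p)) /=; apply: eq_bigr => k _.
by rewrite permK.
Qed.

Lemma rowQ a b : \sum_j Q a j * (Q b j)^*%R = (a == b)%:R.
Proof.
have := congr1 (fun M : 'M[C]_n => M a b) HQ; rewrite /= !mxE => <-.
by apply: eq_bigr => j _; rewrite !mxE.
Qed.

Lemma prod_eqperm (p p' : 'S_n) :
  \prod_k ((p k == p' k)%:R : C) = (p == p')%:R.
Proof.
have [<-|ne] := eqVneq p p'.
  by apply: big1 => k _; rewrite eqxx.
have : ~~ [forall k, p k == p' k].
  apply: contra ne => /forallP H; apply/eqP/permP => k; exact/eqP/H.
rewrite negb_forall => /existsP [k Hk].
by rewrite (bigD1 k) //= (negbTE Hk) mul0r.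
Qed.

Lemma sum_per : \sum_(f : {ffun 'I_n -> 'I_n}) per f * (per f)^*%R = n`!%:R.
Proof.
have E : forall f : {ffun 'I_n -> 'I_n}, per f * (per f)^*%R =
   \sum_(p : 'S_n) \sum_(p' : 'S_n) \prod_k (Q (p k) (f k) * (Q (p' k) (f k))^*%R).
  move=> f; rewrite perE rmorph_sum mulr_suml; apply: eq_bigr => p _.
  rewrite mulr_sumr; apply: eq_bigr => p' _.
  by rewrite rmorph_prod -big_split.
under eq_bigr => f _ do rewrite E.
rewrite exchange_big; under eq_bigr => p _ do rewrite exchange_big.
under eq_bigr => p _ do under eq_bigr => p' _ do
  rewrite -(bigA_distr_bigA (fun k j => Q (p k) j * (Q (p' k) j)^*%R)).
under eq_bigr => p _ do under eq_bigr => p' _ do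
  (under eq_bigr => k _ do rewrite rowQ; rewrite prod_eqperm).
have F : forall p : 'S_n, \sum_(p' : 'S_n) ((p == p')%:R : C) = 1.
  move=> p; rewrite (bigD1 p) //= eqxx big1 ?addr0 // => p' /negbTE.
  by rewrite eq_sym => ->.
under eq_bigr => p _ do rewrite F.
by rewrite sumr_const card_Sn.
Qed.
End Spec.

Lemma Vd_det n (d : 'rV[C]_n) : Vd d = \det (Vandermonde n d).
Proof.
rewrite -det_tr /Vd /determinant; apply: eq_bigr => s _; congr (_ * _).
by apply: eq_bigr => r _; rewrite !mxE.
Qed.

Lemma discE (s : seq C) m : size s = m ->
  disc_of s = \det (Vandermonde m (\row_(j < m) s`_j)) ^+ 2.
Proof.
move=> <-; rewrite det_Vandermonde /disc_of -prodrXl; apply: eq_bigr => i _.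
rewrite -prodrXl; apply: eq_bigr => j _; rewrite !mxE.
by rewrite -sqrrN opprB.
Qed.

Lemma disc_perm m (t : m.-tuple C) (s : seq C) : perm_eq s t ->
  disc_of s = disc_of t.
Proof.
move=> /tuple_permP [p ->].
rewrite (discE (m := m)) ?size_tuple // (discE (m := m)) ?size_tuple //.
have -> : Vandermonde m (\row_(j < m) [tuple tnth t (p i) | i < m]`_j) =
          col_perm p (Vandermonde m (\row_(j < m) t`_j)).
  apply/matrixP => i j; rewrite !mxE.
  by rewrite -!(tnth_nth 0) tnth_mktuple.
by rewrite col_permE det_mulmx det_perm exprMn sqrr_sign mulr1.
Qed.

Lemma char_poly_conj n (Q Qs D : 'M[C]_n) : Qs *m Q = 1%:M ->
  char_poly (Qs *m D *m Q) = char_poly D.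
Proof.
move=> H.
pose f := @polyC C.
have e2 : map_mx f Qs *m ('X%:M) *m map_mx f Q = 'X%:M.
  by rewrite mul_mx_scalar -scalemxAl -map_mxM H map_mx1 scalemx1.
have e3 : char_poly_mx (Qs *m D *m Q) =
    map_mx f Qs *m char_poly_mx D *m map_mx f Q.
  by rewrite /char_poly_mx mulmxBr mulmxBl e2 !map_mxM.
rewrite /char_poly e3 !det_mulmx mulrC mulrA -det_mulmx -map_mxM.
by rewrite (mulmx1C H) map_mx1 det1 mul1r.
Qed.

Lemma key n (A : 'M[C]_n) (s : seq C) : is_hermitian A -> eigenvalue_list A s ->
  \sum_(f : {ffun 'I_n -> 'I_n}) Pf A f * (Pf A f)^*%R = n`!%:R * disc_of s.
Proof.
move=> hA hs.
have hA' : A \is hermsymmx.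
  rewrite qualifE expr0 scale1r; apply/eqP.
  move/eqP: hA => hA; apply/matrixP => i j.
  have := congr1 (fun M : 'M[C]_n => M j i) hA; rewrite !mxE => ->; reflexivity.
have Anorm := hermitian_normalmx hA'.
have dreal := hermitian_spectral_diag_real hA'.
set Q := spectralmx A; set d := spectral_diag A.
have Qu : Q \is unitarymx := spectral_unitarymx A.
have HQ : Q *m map_mx Num.conj Q^T = 1%:M by apply/unitarymxP.
have eA : A = map_mx Num.conj Q^T *m diag_mx d *m Q.
  by rewrite -invmx_unitary //; apply/orthomx_spectralP.
set Qs := map_mx Num.conj Q^T.
have eQ : \det Qs = (\det Q)^*%R.
  by rewrite /Qs det_map_mx det_tr.
have detQ : \det Qs * (\det Qs)^*%R = 1.
  by rewrite {2}eQ conjCK -det_mulmx (mulmx1C HQ) det1.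
have dR : map_mx Num.conj d = d by apply: realmxC.
have VR : (Vd d)^*%R = Vd d.
  rewrite Vd_det -det_map_mx; congr (\det _); apply/matrixP => i j.
  rewrite !mxE rmorphXn /=; congr (_ ^+ _).
  by have := congr1 (fun M : 'rV[C]_n => M 0 j) dR; rewrite /= mxE.
rewrite eA.
under eq_bigr => f _ do rewrite (Pf_spec HQ) !rmorphM /=.
have -> : \sum_(f : {ffun 'I_n -> 'I_n}) \det Qs * (Vd d * per Q f) *
            ((\det Qs)^*%R * ((Vd d)^*%R * (per Q f)^*%R)) =
          \sum_(f : {ffun 'I_n -> 'I_n}) (Vd d * Vd d) * (per Q f * (per Q f)^*%R).
  apply: eq_bigr => f _; rewrite VR.
  transitivity ((\det Qs * (\det Qs)^*%R) * (Vd d * Vd d) * (per Q f * (per Q f)^*%R)).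
    ring.
  by rewrite detQ mul1r.
rewrite -mulr_sumr (sum_per HQ) mulrC; congr (_ * _).
pose t := [tuple d 0 i | i < n].
have hct : char_poly A = \prod_(x <- t) ('X - x%:P).
  rewrite eA char_poly_conj; last exact: mulmx1C.
  rewrite char_poly_trig ?diag_mx_is_trig // big_tuple.
  by apply: eq_bigr => i _; rewrite tnth_mktuple mxE eqxx mulr1n.
have hpe : perm_eq s t.
  by apply: prod_XsubC_eq; rewrite -hs.
rewrite (disc_perm hpe) (discE (m := n)) ?size_tuple // Vd_det.
have -> : \row_(j < n) t`_j = d.
  by apply/rowP => j; rewrite !mxE -(tnth_nth 0) tnth_mktuple.
by rewrite expr2.
Qed.

Lemma Pf_ext n (A : 'M[C]_n) (f g : 'I_n -> 'I_n) : f =1 g -> Pf A f = Pf A g.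
Proof.
move=> e; apply: eq_bigr => p _; congr (\det _).
by apply/matrixP => i k; rewrite !mxE e.
Qed.

Lemma Pf_perm n (A : 'M[C]_n) (f : 'I_n -> 'I_n) (r : 'S_n) :
  Pf A (fun k => f (r k)) = Pf A f.
Proof.
rewrite /Pf; symmetry; rewrite (reindex_inj (mulIg r)) /=; apply: eq_bigr => p _.
by congr (\det _); apply/matrixP => i k; rewrite !mxE permM.
Qed.

Definition ordle n : rel 'I_n := fun a b => (val a <= val b)%N.
Definition keyf n (f : {ffun 'I_n -> 'I_n}) : n.-tuple 'I_n :=
  sort_tuple (@ordle n) [tuple f i | i < n].
Definition Sset n := [set t : n.-tuple 'I_n | sorted leq [seq val i | i <- t]].

Lemma keyf_in n f : keyf f \in Sset n.
Proof.
rewrite inE /keyf /= sorted_map.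
apply: sort_sorted => a b; exact: leq_total.
Qed.

Lemma keyf_perm n (f : {ffun 'I_n -> 'I_n}) :
  exists r : 'S_n, forall k, f k = tnth (keyf f) (r k).
Proof.
have : perm_eq [tuple f i | i < n] (keyf f).
  by rewrite /keyf /= perm_sym perm_sort.
move=> /tuple_permP [r Hr]; exists r => k.
have Ht : [tuple f i | i < n] = [tuple tnth (keyf f) (r i) | i < n] := val_inj Hr.
by rewrite -[f k](tnth_mktuple f k) Ht tnth_mktuple.
Qed.

Lemma Pf_key n (A : 'M[C]_n) (f : {ffun 'I_n -> 'I_n}) :
  Pf A f = Pf A (tnth (keyf f)).
Proof.
have [r Hr] := keyf_perm f.
by rewrite (Pf_ext A Hr) Pf_perm.
Qed.

Lemma group_sum n (G : n.-tuple 'I_n -> C) :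
  \sum_(f : {ffun 'I_n -> 'I_n}) G (keyf f) =
  \sum_(t in Sset n) #|[pred f : {ffun 'I_n -> 'I_n} | keyf f == t]|%:R * G t.
Proof.
rewrite (partition_big (@keyf n) (mem (Sset n))) /=; last by move=> f _; exact: keyf_in.
apply: eq_bigr => t _.
rewrite (eq_bigr (fun _ => G t)); last by move=> f /eqP ->.
rewrite sumr_const mulr_natl; apply: (congr1 (fun k : nat => G t *+ k)); apply: eq_card => f; rewrite !inE /=; reflexivity.
Qed.

Notation RR := Rdefinitions.R.

Lemma ReD (a b : C) : complex.Re (a + b) = complex.Re a + complex.Re b.
Proof. by case: a; case: b. Qed.
Lemma ImD (a b : C) : complex.Im (a + b) = complex.Im a + complex.Im b.
Proof. by case: a; case: b. Qed.

Lemma Re_sum (I : Type) (r : seq I) (F : I -> C) :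
  complex.Re (\sum_(i <- r) F i) = \sum_(i <- r) complex.Re (F i).
Proof. by apply: (big_morph _ ReD). Qed.
Lemma Im_sum (I : Type) (r : seq I) (F : I -> C) :
  complex.Im (\sum_(i <- r) F i) = \sum_(i <- r) complex.Im (F i).
Proof. by apply: (big_morph _ ImD). Qed.

Lemma ReMr (a : C) (x : RR) : complex.Re (a * x%:C) = complex.Re a * x.
Proof. by case: a => a b /=; rewrite mulr0 subr0. Qed.
Lemma ImMr (a : C) (x : RR) : complex.Im (a * x%:C) = complex.Im a * x.
Proof. by case: a => a b /=; rewrite mulr0 add0r. Qed.

Definition reP N (q : {mpoly C[N]}) : {mpoly RR[N]} :=
  \sum_(m <- msupp q) complex.Re q@_m *: 'X_[m].
Definition imP N (q : {mpoly C[N]}) : {mpoly RR[N]} :=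
  \sum_(m <- msupp q) complex.Im q@_m *: 'X_[m].

Lemma prodC N (x : 'I_N -> RR) (m : 'X_{1.. N}) :
  \prod_i ((x i)%:C ^+ m i) = (\prod_i x i ^+ m i)%:C.
Proof. by rewrite rmorph_prod; apply: eq_bigr => i _; rewrite rmorphXn. Qed.

Lemma reP_eval N (q : {mpoly C[N]}) (x : 'I_N -> RR) :
  (reP q).@[x] = complex.Re (q.@[fun k => (x k)%:C]).
Proof.
rewrite /reP (big_morph _ (mevalD x) (meval0 x)) [in RHS]mevalE Re_sum.
by apply: eq_bigr => m _; rewrite mevalZ mevalX prodC ReMr.
Qed.

Lemma imP_eval N (q : {mpoly C[N]}) (x : 'I_N -> RR) :
  (imP q).@[x] = complex.Im (q.@[fun k => (x k)%:C]).
Proof.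
rewrite /imP (big_morph _ (mevalD x) (meval0 x)) [in RHS]mevalE Im_sum.
by apply: eq_bigr => m _; rewrite mevalZ mevalX prodC ImMr.
Qed.

Lemma normsq (z : C) : z * z^*%R = ((complex.Re z) ^+ 2 + (complex.Im z) ^+ 2)%:C.
Proof.
case: z => a b; apply/eqP; rewrite eq_complex /=; apply/andP; split; apply/eqP; ring.
Qed.

Theorem corollary7p3 (n : nat) (hn : (2 <= n)%N) :
  exists p : 'I_(2 * 'C(2 * n - 1, n - 1)) -> {mpoly Rdefinitions.R[n * n + n * n]},
    forall (A : 'M[CR]_n), is_hermitian A ->
    forall s : seq CR, eigenvalue_list A s ->
      disc_of s = (\sum_k (herm_polyfun (p k) A) ^+ 2)%:C.
Proof.
case: n hn => [//|m] hn.
set K := 'C(2 * m.+1 - 1, m.+1 - 1).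
have HK : #|Sset m.+1| = K.
  rewrite /K.
  have -> : (2 * m.+1 - 1 = m.+1 + m)%N by rewrite mul2n doubleS subn1 /= addSn addnn.
  rewrite subn1 /= -bin_sub ?leq_addl // addnK -card_sorted_tuples /Sset.
  done.
pose e := enum (Sset m.+1).
pose t0 : m.+1.-tuple 'I_m.+1 := [tuple i | i < m.+1].
pose T := fun i : nat => nth t0 e i.
pose w := fun i : nat => #|[pred f : {ffun 'I_m.+1 -> 'I_m.+1} | keyf f == T i]|.
pose q := fun i : nat => proj1_sig (ispoly_Pf (tnth (T i))).
pose c := fun i : nat => Num.sqrt ((w i)%:R / (m.+1)`!%:R : RR).
pose pn := fun k : nat => if (k < K)%N then c k *: reP (q k) else c (k - K)%N *: imP (q (k - K)%N).
exists (fun k => pn k).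
move=> A hA s hs.
have hq : forall i, Pf A (tnth (T i)) = (q i).@[hcc A].
  by move=> i; exact: (proj2_sig (ispoly_Pf (tnth (T i))) A).
pose a i := complex.Re (Pf A (tnth (T i))).
pose b i := complex.Im (Pf A (tnth (T i))).
have hre : forall i, herm_polyfun (reP (q i)) A = a i.
  by move=> i; rewrite /herm_polyfun reP_eval /a hq.
have him : forall i, herm_polyfun (imP (q i)) A = b i.
  by move=> i; rewrite /herm_polyfun imP_eval /b hq.
have hc : forall i, c i ^+ 2 = (w i)%:R / (m.+1)`!%:R.
  by move=> i; rewrite sqr_sqrtr // divr_ge0 // ler0n.
have hR : \sum_(k < 2 * K) (herm_polyfun (pn k) A) ^+ 2 =
    \sum_(i < K) ((w i)%:R / (m.+1)`!%:R) * (a i ^+ 2 + b i ^+ 2).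
  rewrite -(big_mkord xpredT (fun k => (herm_polyfun (pn k) A) ^+ 2)).
  rewrite mul2n -addnn (@big_cat_nat _ _ _ K 0 (K + K) _ _ (leq0n K) (leq_addr K K)) /=.
  have -> : \sum_(K <= i < K + K) (herm_polyfun (pn i) A) ^+ 2 =
            \sum_(0 <= i < K) (herm_polyfun (pn (i + K)%N) A) ^+ 2.
    by rewrite -{1}[K]add0n big_addn addnK.
  rewrite !big_mkord -big_split /=; apply: eq_bigr => i _.
  rewrite /pn ltn_ord ltnNge leq_addl /= addnK.
  rewrite /herm_polyfun !mevalZ -/(herm_polyfun _ A) -/(herm_polyfun _ A) hre him.
  by rewrite !exprMn hc mulrDr.
have hL : (m.+1)`!%:R * disc_of s =
    \sum_(i < K) (w i)%:R * ((a i) ^+ 2 + (b i) ^+ 2)%:C.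
  rewrite -(key hA hs).
  under eq_bigr => f _ do rewrite Pf_key.
  rewrite (group_sum (fun t => Pf A (tnth t) * (Pf A (tnth t))^*%R)).
  rewrite -big_enum (big_nth t0) -cardE HK big_mkord.
  by apply: eq_bigr => i _; rewrite normsq.
have nz : ((m.+1)`!%:R : C) != 0 by rewrite pnatr_eq0 -lt0n fact_gt0.
apply: (mulfI nz); rewrite hL hR rmorph_sum mulr_sumr; apply: eq_bigr => i _.
rewrite !rmorphM /= fmorphV /= !rmorph_nat.
by field.
Qed.
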